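(* Let $k\geq 0$ be an integer. If $F$ is a forest on $n$ vertices, then $\alpha_k(F)\geq \Big\lceil\frac{k+1}{k+2}\,n\Big\rceil$.
   Context: All graphs are finite and simple. For a graph $G$, a $k$-sparse set is a set of vertices inducing a subgraph of maximum degree at most $k$, and $\alpha_k(G)$ denotes the maximum size of a $k$-sparse set in $G$. A forest is a graph with no cycles. *)

(* Defs.v *)
From mathcomp Require Import all_boot.
Set Implicit Arguments. Unset Strict Implicit. Unset Printing Implicit Defensive.

Definition simple_graph (T : finType) (e : rel T) : Prop :=
  symmetric e /\ irreflexive e.

(* A cycle: a duplicate-free sequence x :: p of at least 3 vertices with
   consecutive vertices adjacent and the last adjacent to the first. *)
Definition has_cycle (T : finType) (e : rel T) : Prop :=
  exists (x : T) (p : seq T), 2 <= size p /\ uniq (x :: p) /\ cycle e (x :: p).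

Definition forest (T : finType) (e : rel T) : Prop := ~ has_cycle e.

Definition k_sparse (T : finType) (e : rel T) (k : nat) (S : {set T}) : bool :=
  [forall x in S, #|[set y in S | e x y]| <= k].

Definition alpha_k (T : finType) (e : rel T) (k : nat) : nat :=
  \max_(S : {set T} | k_sparse e k S) #|S|.

Definition ceil_div (a b : nat) : nat := (a + b.-1) %/ b.

(* Main.v *)
Require Import Defs.
From mathcomp Require Import all_boot.
From mathcomp Require Import zify.
Set Implicit Arguments. Unset Strict Implicit. Unset Printing Implicit Defensive.

Section Deg.
Variables (T : finType) (e : rel T).
Hypotheses (esym : symmetric e) (eirr : irreflexive e).

Lemma close_cycle x q y : e x y -> y != head x q -> y \in q ->
  uniq (x :: q) -> path e x q -> has_cycle e.
Proof.
move=> exy yh yq Hu Hp.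
case/splitPr: yq Hu Hp yh => q1 q2.
case: q1 => [|z q1]; first by rewrite /= eqxx.
have E: x :: z :: q1 ++ y :: q2 = (x :: z :: rcons q1 y) ++ q2 by rewrite /= cat_rcons.
have E2: (z :: q1) ++ y :: q2 = (z :: rcons q1 y) ++ q2 by rewrite /= cat_rcons.
move=> Hu Hp _.
exists x, (z :: rcons q1 y); split; first by rewrite /= size_rcons.
split.
  by move: Hu; rewrite E cat_uniq => /andP[].
rewrite /cycle rcons_path; apply/andP; split.
  by move: Hp; rewrite E2 cat_path => /andP[].
by rewrite /= last_rcons esym.
Qed.

Lemma pick_nb (A : {set T}) x h : 1 < #|[set y in A | e x y]| ->
  exists y, [/\ y \in A, e x y & y != h].
Proof.
rewrite (cardsD1 h) => H.
have : 0 < #|[set y in A | e x y] :\ h| by move: H; case: (h \in _) => /=; lia.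
case/card_gt0P => y; rewrite !inE => /andP[Hyh /andP[HyA exy]].
by exists y.
Qed.

Lemma cyc_aux (A : {set T}) :
  (forall w, w \in A -> 1 < #|[set y in A | e w y]|) ->
  forall m x q, #|T| - size (x :: q) <= m -> uniq (x :: q) -> path e x q ->
  x \in A -> has_cycle e.
Proof.
move=> HA m; elim: m => [|m IH] x q Hm Hu Hp HxA;
  have [y [HyA exy Hyh]] := pick_nb (head x q) (HA x HxA);
  (case yq: (y \in x :: q);
    [move: yq; rewrite inE => /orP[/eqP yx|yq];
     [by move: exy; rewrite yx eirr | exact: (close_cycle exy Hyh yq Hu Hp)]|]).
  have : uniq (y :: x :: q) by rewrite cons_uniq yq Hu.
  move/card_uniqP => Hs; have := max_card (mem (y :: x :: q)); rewrite Hs /=.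
  move: Hm => /=; lia.
apply: (IH y (x :: q)) => //.
- move: Hm => /=; lia.
- by rewrite cons_uniq yq Hu.
- by rewrite /= esym exy.
Qed.

Lemma low_deg (A : {set T}) : ~ has_cycle e -> A != set0 ->
  exists2 w, w \in A & #|[set y in A | e w y]| <= 1.
Proof.
move=> Hf /set0Pn [x0 Hx0].
case: (boolP [exists w in A, #|[set y in A | e w y]| <= 1]).
  by case/exists_inP => w Hw H; exists w.
rewrite negb_exists_in => /forall_inP H.
case: Hf; apply: (@cyc_aux A _ #|T| x0 [::]) => //.
  by move=> w /H; rewrite -ltnNge.
lia.
Qed.

Lemma deg_add (S : {set T}) w x : w \notin S ->
  #|[set y in w |: S | e x y]| = e x w + #|[set y in S | e x y]|.
Proof.
move=> wS.
have -> : [set y in w |: S | e x y] =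
  (if e x w then w |: [set y in S | e x y] else [set y in S | e x y]).
  apply/setP => y; case exw: (e x w); rewrite !inE;
  (case: (eqVneq y w) => [->|]; [by rewrite exw ?(negbTE wS) | by []]).
case exw: (e x w) => //.
by rewrite cardsU1 inE (negbTE wS).
Qed.

Hypothesis Hlow : forall A : {set T}, A != set0 ->
  exists2 w, w \in A & #|[set y in A | e w y]| <= 1.

Lemma main k n : forall (A : {set T}) (c : T -> nat), #|A| <= n ->
  (forall x, c x <= k) ->
  exists S : {set T}, [/\ S \subset A,
    forall x, x \in S -> #|[set y in S | e x y]| <= c x &
    (k+1) * #|A| <= (k+2) * #|S| + \sum_(x in A) (k - c x)].
Proof.
elim: n => [|n IH] A c HA Hc.
  exists set0; split; [exact: sub0set | by move=> x; rewrite inE |].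
  by move: HA; rewrite leqn0 => /eqP ->; rewrite muln0.
case: (eqVneq A set0) => [->|An0].
  exists set0; split; [exact: sub0set | by move=> x; rewrite inE |].
  by rewrite cards0 muln0.
have [w wA Hw] := Hlow An0.
have sumA (f : T -> nat) : \sum_(x in A) f x = f w + \sum_(x in A :\ w) f x.
  exact: big_setD1.
have cardA : #|A| = (#|A :\ w|).+1 by rewrite (cardsD1 w A) wA.
have HA' : #|A :\ w| <= n by move: HA; rewrite cardA.
have subw (S' : {set T}) : S' \subset A :\ w -> w |: S' \subset A.
  move=> sub; rewrite subUset sub1set wA /=.
  by apply: subset_trans sub _; apply: subsetDl.
have wnS (S' : {set T}) : S' \subset A :\ w -> w \notin S'.
  by move=> sub; apply/negP => /(subsetP sub); rewrite !inE eqxx.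
move: Hw; rewrite leq_eqVlt ltnS leqn0 => /orP[/cards1P [v Bv] | /eqP B0].
  have : v \in [set y in A | e w y] by rewrite Bv set11.
  rewrite inE => /andP[vA ewv].
  have nb y : y \in A -> e w y -> y = v.
    move=> yA ewy; have : y \in [set y in A | e w y] by rewrite inE yA ewy.
    by rewrite Bv inE => /eqP.
  have vw : v != w by apply/negP => /eqP vw; move: ewv; rewrite vw eirr.
  have vAw : v \in A :\ w by rewrite !inE vw vA.
  have sumAw (f : T -> nat) : \sum_(x in A :\ w) f x = f v + \sum_(x in A :\ w :\ v) f x.
    exact: big_setD1.
  have cardAw : #|A :\ w| = (#|A :\ w :\ v|).+1 by rewrite (cardsD1 v (A :\ w)) vAw.
  case: (leqP k ((k - c v) + (k - c w))) => Hk.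
    have HA2 : #|A :\ w :\ v| <= n by lia.
    have [S' [sub deg sz]] := IH (A :\ w :\ v) c HA2 Hc.
    have sub' : S' \subset A :\ w by apply: subset_trans sub _; apply: subsetDl.
    have wS := wnS _ sub'.
    have vS : v \notin S' by apply/negP => /(subsetP sub); rewrite !inE eqxx.
    exists (w |: S'); split; first exact: subw.
      move=> x; rewrite in_setU1 => /orP[/eqP->|xS]; rewrite deg_add //.
        rewrite eirr add0n.
        have -> : [set y in S' | e w y] = set0.
          apply/setP=> y; rewrite !inE; apply/negP => /andP[yS ewy].
          have yA : y \in A by move: (subsetP sub' y yS); rewrite inE => /andP[].
          by move: yS; rewrite (nb y yA ewy) (negbTE vS).
        by rewrite cards0.
      have xA : x \in A by move: (subsetP sub' x xS); rewrite inE => /andP[].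
      case exw: (e x w).
        by move: xS; rewrite (nb x xA) ?(negbTE vS) // esym.
      by rewrite add0n; apply: deg.
    rewrite sumA sumAw cardsU1 (negbTE wS) cardA cardAw.
    move: sz; lia.
  pose c' := fun x => if x == v then (c v).-1 else c x.
  have Hc' x : c' x <= k.
    rewrite /c'; case: (x == v); last exact: Hc.
    by apply: leq_trans (leq_pred _) (Hc v).
  have cv1 : 0 < c v by move: (Hc v) (Hc w) Hk; lia.
  have cw1 : 0 < c w by move: (Hc v) (Hc w) Hk; lia.
  have [S' [sub deg sz]] := IH (A :\ w) c' HA' Hc'.
  have wS := wnS _ sub.
  exists (w |: S'); split; first exact: subw.
    move=> x; rewrite in_setU1 => /orP[/eqP->|xS]; rewrite deg_add //.
      rewrite eirr add0n; apply: leq_trans cw1.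
      rewrite -(cards1 v) -Bv; apply: subset_leq_card.
      apply/subsetP => y; rewrite !inE => /andP[yS ->].
      by move: (subsetP sub y yS); rewrite inE => /andP[_ ->].
    have xA : x \in A by move: (subsetP sub x xS); rewrite inE => /andP[].
    have := deg x xS; rewrite /c'.
    case: (eqVneq x v) => [->|xv].
      by rewrite esym ewv; lia.
    case exw: (e x w).
      by move: xv; rewrite (nb x xA) ?eqxx // esym.
    by rewrite add0n.
  have sc' : \sum_(x in A :\ w) (k - c' x) = (k - (c v).-1) + \sum_(x in A :\ w :\ v) (k - c x).
    rewrite sumAw /c' eqxx; congr (_ + _).
    by apply: eq_bigr => x; rewrite !inE => /andP[/negbTE -> _].
  move: sz; rewrite sc' sumA sumAw cardsU1 (negbTE wS) cardA.
  move: (Hc v) (Hc w) cv1; lia.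
have nb y : y \in A -> e w y = false.
  move=> yA; apply/negP => ewy.
  have : y \in [set y in A | e w y] by rewrite inE yA ewy.
  by rewrite (cards0_eq B0) inE.
have [S' [sub deg sz]] := IH (A :\ w) c HA' Hc.
have wS := wnS _ sub.
exists (w |: S'); split; first exact: subw.
  move=> x; rewrite in_setU1 => /orP[/eqP->|xS]; rewrite deg_add //.
    rewrite eirr add0n.
    have -> : [set y in S' | e w y] = set0.
      apply/setP=> y; rewrite !inE; apply/negP => /andP[yS ewy].
      have yA : y \in A by move: (subsetP sub y yS); rewrite inE => /andP[].
      by rewrite nb in ewy.
    by rewrite cards0.
  have xA : x \in A by move: (subsetP sub x xS); rewrite inE => /andP[].
  by rewrite esym nb // add0n; apply: deg.
rewrite sumA cardsU1 (negbTE wS) cardA.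
move: sz; lia.
Qed.
End Deg.

Theorem lemma3p2 (k : nat) (T : finType) (e : rel T) :
  simple_graph e -> forest e ->
  ceil_div ((k + 1) * #|T|) (k + 2) <= alpha_k e k.
Proof.
move=> [esym eirr] Hf.
have Hlow := @low_deg T e esym eirr.
have [S [_ deg sz]] := @main T e esym eirr (fun A => Hlow A Hf) k #|T| [set: T]
  (fun _ => k) (max_card _) (fun _ => leqnn k).
have Hs : k_sparse e k S by apply/forall_inP.
have E : \sum_(x in [set: T]) (k - k) = 0 by rewrite big1 // => x _; rewrite subnn.
rewrite E addn0 cardsT in sz.
apply: leq_trans (_ : #|S| <= _); last by rewrite /alpha_k; apply: (@leq_bigmax_cond _ _ (fun S : {set T} => #|S|)).
rewrite /ceil_div -ltnS ltn_divLR ?addn2 //= mulSn mulnC -addn2.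
rewrite mulnC [#|S| * _]mulnC; move: sz.
move: ((k+1)*#|T|) ((k+2)*#|S|) => a b; lia.
Qed.
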